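(* Assume the setting below and one of: (g) general missingness ($M_i(1),M_i(0)\in\{0,1\}$ arbitrary constants, possibly depending on the potential outcomes); (mp) $M_i(1)\ge M_i(0)$ for all $i$; (mn) $M_i(1)\le M_i(0)$ for all $i$. For $\boldsymbol\delta\in\mathbb R^n$ define $\tilde{\boldsymbol Y}^{\square}_{\boldsymbol Z,\boldsymbol\delta}(0)\in\overline{\mathbb R}^n$, $\square\in\{\texttt g,\texttt{mp},\texttt{mn}\}$, coordinatewise by: for $Z_i=1,M_i=1$ all three equal $Y_i-\delta_i$; for $Z_i=0,M_i=1$ all three equal $Y_i$; for $Z_i=1,M_i=0$ they equal $-\infty$ ($\texttt g$), $+\infty$ ($\texttt{mp}$), $-\infty$ ($\texttt{mn}$); for $Z_i=0,M_i=0$ they equal $+\infty$ ($\texttt g$), $+\infty$ ($\texttt{mp}$), $-\infty$ ($\texttt{mn}$). Let $\mathcal J=\{i:Z_i=M_i=1\}$, $n_{11}=|\mathcal J|$, and write $\mathcal J=\{j_1,\dots,j_{n_{11}}\}$ with $\psi_{j_{l+1},j_l}(Y_{j_{l+1}},Y_{j_l})=1$ for $1\le l<n_{11}$; for $1\le L\le n_{11}$ let $\mathcal J_L=\{j_{n_{11}-L+1},\dots,j_{n_{11}}\}$ and $\mathcal J_0=\emptyset$. Fix $\kappa>0$. For $1\le k\le n_1$, $c\in\mathbb R$ define $\boldsymbol\xi_{k,c}\in\mathbb R^n$ by $\xi_{k,c,i}=\max_{l:Z_l=M_l=1}Y_l-\min_{l:Z_l=0,M_l=1}Y_l+\kappa$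 if $i\in\mathcal J_{\min\{n_1-k,n_{11}\}}$ and $\xi_{k,c,i}=c$ otherwise. Then, with $\square$ the label of the assumed mechanism, $$\tilde p^{\square}_{\texttt t,k,c}:=G_{\mathrm R,\phi}\big(t_{\mathrm R,\phi}(\boldsymbol Z,\tilde{\boldsymbol Y}^{\square}_{\boldsymbol Z,\boldsymbol\xi_{k,c}}(0))\big)$$ is a valid p-value for $H^{\texttt t}_{k,c}:\sum_{i=1}^nZ_i\mathbf 1\{\tau_i>c\}\le n_1-k$ (equivalently, the $k$-th smallest individual effect among treated units is $\le c$), in the sense that $\mathbb P\big(\tilde p^{\square}_{\texttt t,k,c}\le\alpha\text{ and }H^{\texttt t}_{k,c}\text{ holds}\big)\le\alpha$ for all $\alpha\in(0,1)$.
   Context: There are $n$ units. Unit $i$ has fixed potential outcomes $Y_i^\star(0),Y_i^\star(1)\in\mathbb R$ and fixed potential missingness indicators $M_i(0),M_i(1)\in\{0,1\}$; $\tau_i=Y_i^\star(1)-Y_i^\star(0)$. The assignment $\boldsymbol Z\in\{0,1\}^n$ is drawn from a completely randomized experiment (CRE): for fixed positive integers $n_1,n_0$, $n_1+n_0=n$, $\boldsymbol Z$ is uniform over vectors in $\{0,1\}^n$ with exactly $n_1$ ones, independently of all potential outcomes and missingness indicators; probabilities are over $\boldsymbol Z$. Observed missingness $M_i=Z_iM_i(1)+(1-Z_i)M_i(0)$; the realized outcome $Z_iY_i^\star(1)+(1-Z_i)Y_i^\star(0)$ is observed, and denoted $Y_i$, only when $M_i=1$. The null $H^{\texttt t}_{k,c}$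 is an event depending on $\boldsymbol Z$. $\overline{\mathbb R}=\mathbb R\cup\{\pm\infty\}$; $\psi_{i,j}(y,y')=\mathbf 1\{y>y'\}+\mathbf 1\{y=y'\}\mathbf 1\{i\ge j\}$; $\mathrm{rank}_i(\boldsymbol y)=\sum_j\psi_{i,j}(y_i,y_j)$. $\phi$ is a fixed nondecreasing real function on the nonnegative integers. $t_{\mathrm R,\phi}(\boldsymbol z,\boldsymbol y)$ is either $\sum_i z_i\phi(\mathrm{rank}_i(\boldsymbol y))$ or $\sum_i z_i\phi\big(\sum_j(1-z_j)\psi_{i,j}(y_i,y_j)\big)$; the result holds for either. $G_{\mathrm R,\phi}(c)=\mathbb P(t_{\mathrm R,\phi}(\boldsymbol A,\boldsymbol y_0)\ge c)$ with $\boldsymbol A$ from the CRE and $\boldsymbol y_0\in\mathbb R^n$ any fixed vector (independent of $\boldsymbol y_0$). *)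

(* Defs.v *)
From HB Require Import structures.
From mathcomp Require Import all_boot all_order all_algebra.
From mathcomp Require Import reals constructive_ereal.
Set Implicit Arguments. Unset Strict Implicit. Unset Printing Implicit Defensive.
Import Order.TTheory GRing.Theory Num.Theory.
Local Open Scope ring_scope.

Section Defs.
Variable R : realType.
Variable n : nat.

Definition assign := {ffun 'I_n -> bool}.

(* support of the completely randomized experiment: exactly n1 treated *)
Definition CRE (n1 : nat) : {set assign} := [set z : assign | #|[set i | z i]| == n1].

Definition PrCRE (n1 : nat) (E : pred assign) : R :=
  (#|[set z in CRE n1 | E z]|%:R) / (#|CRE n1|%:R).

Definition psi (i j : 'I_n) (y y' : \bar R) : nat :=
  ((y' < y)%E + ((y == y') && (j <= i)%N))%N.

Definition rank (y : 'I_n -> \bar R) (i : 'I_n) : nat := (\sum_(j < n) psi i j (y i) (y j))%N.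

Inductive stat_kind := RankAll | RankCtrl.

Definition tR (s : stat_kind) (phi : nat -> R) (z : assign) (y : 'I_n -> \bar R) : R :=
  match s with
  | RankAll => \sum_(i < n | z i) phi (rank y i)
  | RankCtrl => \sum_(i < n | z i) phi (\sum_(j < n | ~~ z j) psi i j (y i) (y j))%N
  end.

Definition GR (n1 : nat) (s : stat_kind) (phi : nat -> R) (yref : 'I_n -> R) (c : R) : R :=
  PrCRE n1 (fun a => c <= tR s phi a (fun i => (yref i)%:E)).

Inductive mech := Mg | Mmp | Mmn.

Definition mech_assump (m : mech) (M1 M0 : 'I_n -> bool) : Prop :=
  match m with
  | Mg => True
  | Mmp => forall i, (M0 i <= M1 i)%O
  | Mmn => forall i, (M1 i <= M0 i)%O
  end.

Variables (y1 y0 : 'I_n -> R) (M1 M0 : 'I_n -> bool).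

Definition Mobs (z : assign) (i : 'I_n) : bool := if z i then M1 i else M0 i.
Definition Yobs (z : assign) (i : 'I_n) : R := if z i then y1 i else y0 i.

Definition Ytilde (m : mech) (z : assign) (delta : 'I_n -> R) (i : 'I_n) : \bar R :=
  if Mobs z i then
    (if z i then (Yobs z i - delta i)%:E else (Yobs z i)%:E)
  else match m, z i with
       | Mg, true => -oo%E
       | Mg, false => +oo%E
       | Mmp, _ => +oo%E
       | Mmn, _ => -oo%E
       end.

(* maximum / minimum of f over a set S (convention 0 when S is empty) *)
Definition maxS (S : {set 'I_n}) (f : 'I_n -> R) : R :=
  if [pick i in S] is Some i0 then \big[Num.max/f i0]_(i in S) f i else 0.
Definition minS (S : {set 'I_n}) (f : 'I_n -> R) : R :=
  if [pick i in S] is Some i0 then \big[Num.min/f i0]_(i in S) f i else 0.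

Definition Jset (z : assign) : {set 'I_n} := [set i | z i && Mobs z i].
Definition Cobs (z : assign) : {set 'I_n} := [set i | ~~ z i && Mobs z i].

(* position of i in the enumeration j_1,...,j_{n11} of J, which is
   increasing for the order psi: j_l has position l *)
Definition posJ (z : assign) (i : 'I_n) : nat :=
  (\sum_(j in Jset z) psi i j (Yobs z i)%:E (Yobs z j)%:E)%N.

Definition JL (z : assign) (L : nat) : {set 'I_n} :=
  [set i in Jset z | (#|Jset z| - L < posJ z i)%N].

Definition xi (n1 k : nat) (c kappa : R) (z : assign) (i : 'I_n) : R :=
  if i \in JL z (minn (n1 - k) #|Jset z|) then
    maxS (Jset z) (Yobs z) - minS (Cobs z) (Yobs z) + kappa
  else c.

Definition Hnull (n1 k : nat) (c : R) (z : assign) : bool :=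
  (#|[set i | z i && (c < y1 i - y0 i)%R]| <= n1 - k)%N.

End Defs.

(* Main.v *)
Require Import Defs.
From HB Require Import structures.
From mathcomp Require Import all_boot all_order all_algebra.
From mathcomp Require Import reals constructive_ereal.
From mathcomp Require Import zify ring lra.
Import Order.TTheory GRing.Theory Num.Theory.
Local Open Scope ring_scope.
Set Implicit Arguments. Unset Strict Implicit. Unset Printing Implicit Defensive.

Section Le2.
Variable R : realType.
Implicit Types a b d : \bar R.

Definition le2 a (i : nat) b (j : nat) : bool :=
  ((a < b)%E || ((a == b) && (i <= j)%N)).

Lemma le2_refl a i : le2 a i a i.
Proof. by rewrite /le2 eqxx leqnn orbT. Qed.

Lemma le2_trans a i b j d k : le2 a i b j -> le2 b j d k -> le2 a i d k.
Proof.
rewrite /le2 => /orP[ab|/andP[/eqP<- ij]] /orP[bd|/andP[/eqP<- jk]].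
- by rewrite (lt_trans ab bd).
- by rewrite ab.
- by rewrite bd.
- by rewrite eqxx (leq_trans ij jk) orbT.
Qed.

Lemma le2_total a i b j : le2 a i b j || le2 b j a i.
Proof.
rewrite /le2; case: (ltgtP a b) => [ab|ba|eab]; rewrite ?orbT //.
subst b; rewrite ?eqxx /=; case: (leqP i j) => //= /ltnW ->; by rewrite ?orbT.
Qed.

Lemma le2_anti a i b j : le2 a i b j -> le2 b j a i -> a = b /\ i = j.
Proof.
rewrite /le2 => /orP[ab|/andP[/eqP-> ij]] /orP[ba|/andP[/eqP eba ji]].
- by move: (lt_trans ab ba); rewrite ltxx.
- by move: ab; rewrite eba ltxx.
- by move: ba; rewrite ltxx.
- by split=> //; apply/eqP; rewrite eqn_leq ij ji.
Qed.

Lemma le2_notE a i b j : ~~ le2 a i b j -> le2 b j a i.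
Proof. by move=> h; move: (le2_total a i b j); rewrite (negbTE h). Qed.

Lemma le2_val a b i : (a <= b)%E -> le2 a i b i.
Proof. by rewrite le_eqVlt /le2 => /orP[->|->]; rewrite ?leqnn ?orbT. Qed.

Lemma le2_lt a b i j : (a < b)%E -> le2 a i b j.
Proof. by rewrite /le2 => ->. Qed.

Lemma le2_nlt a b i j : (b < a)%E -> ~~ le2 a i b j.
Proof.
move=> ba; rewrite /le2 negb_or; apply/andP; split.
  by rewrite lt_gtF.
by rewrite (gt_eqF ba).
Qed.

Lemma le2_shift (x x' e : R) i j : le2 x%:E i x'%:E j -> le2 (x - e)%:E i (x' - e)%:E j.
Proof.
rewrite /le2 !lte_fin !eqe ltrBlDr subrK => /orP[->//|/andP[/eqP-> ->]].
by rewrite eqxx orbT.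
Qed.

Lemma psiE n (i j : 'I_n) a b : psi i j a b = le2 b j a i.
Proof.
rewrite /psi /le2; case: (ltgtP b a) => [ba|ab|_] //=; by case: (j <= i)%N.
Qed.

End Le2.


Lemma card_inj_range n (S : {set 'I_n}) (f : 'I_n -> nat) lo hi :
  {in S &, injective f} -> (forall i, i \in S -> lo <= f i < hi)%N ->
  (#|S| <= hi - lo)%N.
Proof.
move=> finj hf; rewrite cardE -(size_map f).
have u : uniq (map f (enum S)).
  by rewrite map_inj_in_uniq ?enum_uniq // => x y; rewrite !mem_enum; apply: finj.
rewrite -(size_iota lo (hi - lo)); apply: uniq_leq_size => // x /mapP[i].
rewrite mem_enum => /hf /andP[h1 h2] ->; rewrite mem_iota h1 /= subnKC //.
by apply: leq_trans (ltnW h2).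
Qed.

Lemma argmax_ex n (S : {set 'I_n}) (f : 'I_n -> nat) j0 : j0 \in S ->
  exists2 j, j \in S & forall i, i \in S -> (f i <= f j)%N.
Proof.
move=> j0S; case: (arg_maxnP f j0S) => j jS jmax.
by exists j.
Qed.

Section Gen.
Variables (R : realType) (n : nat) (y : 'I_n -> \bar R).

Implicit Types P : pred 'I_n.
Definition lx (i j : 'I_n) := le2 (y i) i (y j) j.

Definition cnt (P : pred 'I_n) (i : 'I_n) : nat := #|[set j | P j && lx j i]|.

Lemma sum_psi (P : pred 'I_n) i :
  (\sum_(j < n | P j) psi i j (y i) (y j))%N = cnt P i.
Proof.
rewrite /cnt -sum1dep_card big_mkcondr /=; apply: eq_bigr => j _.
by rewrite psiE /lx; case: le2.
Qed.

Lemma lx_refl i : lx i i. Proof. exact: le2_refl. Qed.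
Lemma lx_trans i j k : lx i j -> lx j k -> lx i k. Proof. exact: le2_trans. Qed.
Lemma lx_notE i j : ~~ lx i j -> lx j i. Proof. exact: le2_notE. Qed.
Lemma lx_anti i j : lx i j -> lx j i -> i = j.
Proof. by move=> h1 h2; case: (le2_anti h1 h2) => _ /val_inj. Qed.

Lemma cnt_mono P i j : lx i j -> (cnt P i <= cnt P j)%N.
Proof.
move=> ij; apply: subset_leq_card; apply/subsetP => k.
rewrite !inE => /andP[-> ki] /=; exact: lx_trans ki ij.
Qed.

Lemma cnt_lt P i j : P i -> ~~ lx i j -> (cnt P j < cnt P i)%N.
Proof.
move=> Pi nij; apply: proper_card; apply/properP; split.
  apply/subsetP => k; rewrite !inE => /andP[-> kj] /=.
  exact: lx_trans kj (lx_notE nij).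
by exists i; rewrite !inE ?Pi ?lx_refl // (negbTE nij) andbF.
Qed.

Lemma cnt_le_lx P i j : P i -> (cnt P i <= cnt P j)%N -> lx i j.
Proof.
move=> Pi h; apply/negPn/negP => nij.
by move: (leq_trans (cnt_lt Pi nij) h); rewrite ltnn.
Qed.

Lemma cnt_pos P i : P i -> (0 < cnt P i)%N.
Proof. by move=> Pi; apply/card_gt0P; exists i; rewrite inE Pi lx_refl. Qed.

Lemma cnt_le_card P i : (cnt P i <= #|[set j | P j]|)%N.
Proof.
by apply: subset_leq_card; apply/subsetP => k; rewrite !inE => /andP[].
Qed.

Lemma cnt_inj P i j : P i -> P j -> cnt P i = cnt P j -> i = j.
Proof.
move=> Pi Pj e; apply: lx_anti; apply: (cnt_le_lx (P:=P)) => //; by rewrite e.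
Qed.

Lemma cnt_set_inj P (S : {set 'I_n}) :
  (forall i, i \in S -> P i) -> {in S &, injective (cnt P)}.
Proof. by move=> h i j iS jS; apply: cnt_inj; apply: h. Qed.

Lemma card_le_max P (S : {set 'I_n}) j :
  (forall i, i \in S -> P i) -> (forall i, i \in S -> cnt P i <= cnt P j)%N ->
  (#|S| <= cnt P j)%N.
Proof.
move=> SP hj.
have := @card_inj_range n S (cnt P) 1 (cnt P j).+1 (cnt_set_inj SP).
rewrite subn1 /=; apply.
by move=> i iS; rewrite cnt_pos ?SP //= ltnS hj.
Qed.

Variables (P Q : pred 'I_n).

Lemma A1 r a : a = #|[set i | P i && (cnt Q i + cnt P i < r)%N]| ->
  (a <= #|[set i | P i && (cnt Q i + a < r)%N]|)%N.
Proof.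
set S := [set i | _ && _] => ->.
have [/eqP S0|/set0Pn[j0 j0S]] := boolP (S == set0).
  by rewrite S0 cards0.
have [j jS jmax] := argmax_ex (cnt P) j0S.
have SP : forall i, i \in S -> P i by move=> i; rewrite inE => /andP[].
have aj : (#|S| <= cnt P j)%N by apply: card_le_max.
apply: subset_leq_card; apply/subsetP => i iS; rewrite inE SP //=.
have lij : lx i j by apply: (cnt_le_lx (P:=P)); [apply: SP | apply: jmax].
move: jS; rewrite inE => /andP[_ hj].
apply: leq_ltn_trans hj; exact: leq_add (cnt_mono Q lij) aj.
Qed.

Lemma A2 r l : (l <= #|[set i | P i && (cnt Q i + l < r)%N]|)%N ->
  (l <= #|[set i | P i && (cnt Q i + cnt P i < r)%N]|)%N.
Proof.
set S := [set i | _ && _] => lS.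
have [->|lpos] := posnP l; first by [].
have /set0Pn[j0 j0S] : S != set0.
  by apply/negP => /eqP S0; move: lS; rewrite S0 cards0 leqn0 => /eqP l0; move: lpos; rewrite l0.
have [j jS jmax] := argmax_ex (cnt P) j0S.
have SP : forall i, i \in S -> P i by move=> i; rewrite inE => /andP[].
have Sj : (#|S| <= cnt P j)%N by apply: card_le_max.
set PP := [set i | P i && (cnt P i <= l)%N].
have sub : PP \subset [set i | P i && (cnt Q i + cnt P i < r)%N].
  apply/subsetP => i; rewrite !inE => /andP[Pi il]; rewrite Pi /=.
  have lij : lx i j by apply: (cnt_le_lx (P:=P)) => //; apply: leq_trans il (leq_trans lS Sj).
  move: jS; rewrite inE => /andP[_ hj].
  apply: leq_ltn_trans hj; exact: leq_add (cnt_mono Q lij) il.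
apply: leq_trans (subset_leq_card sub).
set TT := [set i | P i].
have lT : (l <= #|TT|)%N.
  apply: leq_trans lS _; apply: subset_leq_card; apply/subsetP => i.
  by rewrite !inE => /andP[].
have : (#|TT :\: PP| <= #|TT| - l)%N.
  rewrite -subSS.
  apply: (@card_inj_range _ _ (cnt P)).
    by apply: cnt_set_inj => i; rewrite !inE => /andP[_].
  move=> i; rewrite !inE => /andP[h Pi]; move: h; rewrite Pi /= -ltnNge => ->.
  by rewrite ltnS cnt_le_card.
have -> : #|TT :\: PP| = (#|TT| - #|PP|)%N.
  by rewrite cardsDS //; apply/subsetP => i; rewrite !inE => /andP[].
move=> h; have : (#|PP| <= #|TT|)%N.
  by apply: subset_leq_card; apply/subsetP => i; rewrite !inE => /andP[].
move: h; set x := #|PP|; set t := #|TT| => h1 h2.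
move: lT; rewrite -/t => lT; lia.
Qed.

End Gen.


Lemma sum_bool_card n (P : pred 'I_n) (b : 'I_n -> bool) :
  (\sum_(i < n | P i) (b i : nat))%N = #|[set i | P i && b i]|.
Proof.
rewrite -sum1dep_card big_mkcondr /=; apply: eq_bigr => j _; by case: (b j).
Qed.

Lemma card_split_thr n (P : pred 'I_n) (f : 'I_n -> nat) r :
  (#|[set i | P i && (r < f i)%N]| + #|[set i | P i && (f i < r.+1)%N]|)%N
  = #|[set i | P i]|.
Proof.
rewrite -(cardsID [set i | (r < f i)%N] [set i | P i]); congr (_ + _)%N.
  by apply: eq_card => i; rewrite !inE.
by apply: eq_card => i; rewrite !inE ltnS leqNgt andbC.
Qed.

Lemma thr_flip n (P : pred 'I_n) (f f' : 'I_n -> nat) :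
  (forall v, #|[set i | P i && (f' i < v)%N]| <= #|[set i | P i && (f i < v)%N]|)%N ->
  forall r, (#|[set i | P i && (r < f i)%N]| <= #|[set i | P i && (r < f' i)%N]|)%N.
Proof.
move=> h r; have := card_split_thr P f r; have := card_split_thr P f' r.
have := h r.+1; lia.
Qed.

Section Abel.
Variables (R : realType) (phi : nat -> R).
Hypothesis hphi : {homo phi : a b / (a <= b)%N >-> a <= b}.

Lemma tele N x : \sum_(r < N) ((r < x)%N : nat)%:R * (phi r.+1 - phi r)
   = phi (minn x N) - phi 0.
Proof.
elim: N => [|N IH]; first by rewrite big_ord0 minn0 subrr.
rewrite big_ord_recr IH.
case: (ltnP N x) => Nx /=.
  have -> : minn x N.+1 = N.+1 by apply/minn_idPr.
  rewrite mul1r; ring.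
have -> : minn x N.+1 = x by apply/minn_idPl; apply: leq_trans Nx _.
by rewrite mul0r addr0.
Qed.

Lemma abel n (P : pred 'I_n) (s s' : 'I_n -> nat) N :
  (forall i, P i -> (s i <= N)%N) -> (forall i, P i -> (s' i <= N)%N) ->
  (forall r, (#|[set i | P i && (r < s i)%N]| <= #|[set i | P i && (r < s' i)%N]|)%N) ->
  \sum_(i < n | P i) phi (s i) <= \sum_(i < n | P i) phi (s' i).
Proof.
move=> hs hs' hr.
have key : forall (t : 'I_n -> nat), (forall i, P i -> (t i <= N)%N) ->
  \sum_(i < n | P i) phi (t i) = \sum_(i < n | P i) phi 0 +
     \sum_(r < N) ((#|[set i | P i && (r < t i)%N]|)%:R * (phi r.+1 - phi r)).
  move=> t ht.
  rewrite (eq_bigr (fun i => phi 0 + \sum_(r < N) ((r < t i)%N : nat)%:R * (phi r.+1 - phi r))); last first.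
    by move=> i Pi; rewrite tele; have /minn_idPl -> := ht i Pi; rewrite addrC subrK.
  rewrite big_split /=; congr (_ + _).
  rewrite exchange_big /=; apply: eq_bigr => r _.
  by rewrite -big_distrl /= -natr_sum sum_bool_card.
rewrite (key s hs) (key s' hs') lerD2l; apply: ler_sum => r _.
apply: ler_wpM2r; first by rewrite subr_ge0; apply: hphi.
by rewrite ler_nat.
Qed.

End Abel.

Section TR.
Variables (R : realType) (n : nat) (phi : nat -> R).
Hypothesis hphi : {homo phi : a b / (a <= b)%N >-> a <= b}.

Lemma cnt_split (y : 'I_n -> \bar R) (z : assign n) i :
  cnt y predT i = (cnt y (fun j => ~~ z j) i + cnt y (fun j => z j) i)%N.
Proof.
rewrite /cnt -(cardsID [set j | z j] [set j | predT j && lx y j i]) addnC.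
have e1 : #|[set j | predT j && lx y j i] :&: [set j | z j]| = #|[set j | z j && lx y j i]|.
  by apply: eq_card => j; rewrite !inE andbC.
have e2 : #|[set j | predT j && lx y j i] :\: [set j | z j]| = #|[set j | ~~ z j && lx y j i]|.
  by apply: eq_card => j; rewrite !inE andbC.
by rewrite e1 e2.
Qed.

Lemma cnt_le_n (y : 'I_n -> \bar R) P i : (cnt y P i <= n)%N.
Proof. by rewrite /cnt; apply: leq_trans (max_card _) _; rewrite card_ord. Qed.

Lemma tR_le (s : stat_kind) (z : assign n) (yt yf : 'I_n -> \bar R) :
  (forall v, #|[set i | z i && (cnt yf (fun j => ~~ z j) i < v)%N]|
          <= #|[set i | z i && (cnt yt (fun j => ~~ z j) i < v)%N]|)%N ->
  tR s phi z yt <= tR s phi z yf.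
Proof.
move=> D; case: s => /=.
  rewrite /rank.
  under eq_bigr => i _ do rewrite (sum_psi yt predT) (cnt_split _ z).
  under [X in _ <= X]eq_bigr => i _ do rewrite (sum_psi yf predT) (cnt_split _ z).
  apply: (abel hphi (N := n + n)).
  - by move=> i _; apply: leq_add; apply: cnt_le_n.
  - by move=> i _; apply: leq_add; apply: cnt_le_n.
  apply: thr_flip => r.
  set a := #|[set i | z i && _]|.
  have h1 := @A1 _ _ yf (fun i => z i) (fun j => ~~ z j) r a erefl.
  apply: (@A2 _ _ yt (fun i => z i) (fun j => ~~ z j) r a).
  apply: leq_trans h1 _.
  have e : forall (y : 'I_n -> \bar R), #|[set i | z i && (cnt y (fun j => ~~ z j) i + a < r)%N]|
     = #|[set i | z i && (cnt y (fun j => ~~ z j) i < r - a)%N]|.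
    by move=> y; apply: eq_card => i; rewrite !inE ltn_subRL addnC.
  by rewrite !e.
under eq_bigr => i _ do rewrite (sum_psi yt (fun j => ~~ z j)).
under [X in _ <= X]eq_bigr => i _ do rewrite (sum_psi yf (fun j => ~~ z j)).
apply: (abel hphi (N := n)).
- by move=> i _; apply: cnt_le_n.
- by move=> i _; apply: cnt_le_n.
by apply: thr_flip.
Qed.

End TR.


Section Inv.
Variables (R : realType) (n : nat).

Definition rk (y : 'I_n -> \bar R) i := cnt y predT i.

Lemma psi_rk (y : 'I_n -> \bar R) i j : psi i j (y i) (y j) = (rk y j <= rk y i)%N.
Proof.
rewrite psiE; congr (nat_of_bool _); apply/idP/idP => h.
  exact: (cnt_mono predT h).
exact: (cnt_le_lx (P := predT)).
Qed.

Lemma rk_lt (y : 'I_n -> \bar R) i : ((rk y i).-1 < n)%N.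
Proof.
have h1 := cnt_pos y (P := predT) (i := i) isT.
have h2 := cnt_le_n y predT i.
rewrite /rk; lia.
Qed.

Definition fo (y : 'I_n -> \bar R) i : 'I_n := Ordinal (rk_lt y i).

Lemma fo_inj y : injective (fo y).
Proof.
move=> i j /(congr1 val) /= e.
have h1 := cnt_pos y (P := predT) (i := i) isT.
have h2 := cnt_pos y (P := predT) (i := j) isT.
apply: (cnt_inj (y := y) (P := predT)) => //.
move: e; rewrite /rk; lia.
Qed.

Lemma fo_rk y i j : fo y i = fo y j -> rk y i = rk y j.
Proof. by move/fo_inj ->. Qed.

Variables (y yr : 'I_n -> \bar R).

Definition sig i := invF (@fo_inj yr) (fo y i).

Lemma sig_inj : injective sig.
Proof.
move=> i j; rewrite /sig => e.
apply: (@fo_inj y); apply: (can_inj (f_invF (@fo_inj yr))) e.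
Qed.

Lemma rk_sig i : rk yr (sig i) = rk y i.
Proof.
have e : fo yr (sig i) = fo y i by rewrite /sig f_invF.
move/(congr1 val): e => /=.
have h1 := cnt_pos yr (P := predT) (i := sig i) isT.
have h2 := cnt_pos y (P := predT) (i := i) isT.
rewrite /rk; lia.
Qed.

Lemma psi_sig i j : psi (sig i) (sig j) (yr (sig i)) (yr (sig j)) = psi i j (y i) (y j).
Proof. by rewrite !psi_rk !rk_sig. Qed.

Definition gz (z : assign n) : assign n := [ffun i => z (invF sig_inj i)].

Lemma gz_sig z i : gz z (sig i) = z i.
Proof. by rewrite /gz ffunE invF_f. Qed.

Lemma gz_inj : injective gz.
Proof.
move=> z1 z2 e; apply/ffunP => i.
by rewrite -(gz_sig z1) -(gz_sig z2) e.
Qed.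

Lemma tR_inv (s : stat_kind) (phi : nat -> R) z :
  tR s phi z y = tR s phi (gz z) yr.
Proof.
case: s => /=.
  rewrite [RHS](reindex_inj sig_inj) /=.
  apply: eq_big => i; first by rewrite gz_sig.
  move=> _; congr (phi _); rewrite /rank [RHS](reindex_inj sig_inj) /=.
  by apply: eq_bigr => j _; rewrite psi_sig.
rewrite [RHS](reindex_inj sig_inj) /=.
apply: eq_big => i; first by rewrite gz_sig.
move=> _; congr (phi _); rewrite [RHS](reindex_inj sig_inj) /=.
by apply: eq_big => j; [rewrite gz_sig | move=> _; rewrite psi_sig].
Qed.

Lemma CRE_gz n1 z : (gz z \in CRE n n1) = (z \in CRE n n1).
Proof.
rewrite /CRE !inE.
have -> : [set i | gz z i] = (invF sig_inj) @^-1: [set i | z i].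
  by apply/setP => i; rewrite !inE /gz ffunE.
by rewrite card_preimset //; apply: (can_inj (f_invF sig_inj)).
Qed.

Lemma count_inv n1 (E : pred (assign n)) :
  #|[set z in CRE n n1 | E (gz z)]| = #|[set w in CRE n n1 | E w]|.
Proof.
rewrite -(card_preimset [set w in CRE n n1 | E w] gz_inj); apply: eq_card => z.
have := CRE_gz n1 z; rewrite /CRE !inE => ->; done.
Qed.

End Inv.

Lemma GR_any (R : realType) n n1 s phi (yref : 'I_n -> R) (y : 'I_n -> \bar R) c :
  GR n1 s phi yref c = PrCRE R n1 (fun a => c <= tR s phi a y).
Proof.
rewrite /GR /PrCRE; congr (_%:R / _).
set yr := fun i => (yref i)%:E.
rewrite -(count_inv y yr n1 (fun a => c <= tR s phi a yr)).
by apply: eq_card => z; rewrite !inE (tR_inv y yr).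
Qed.

Lemma validity (R : realType) n n1 (T : assign n -> R) (alpha : R) : 0 <= alpha ->
  PrCRE R n1 (fun z => PrCRE R n1 (fun a => T z <= T a) <= alpha) <= alpha.
Proof.
move=> a0; rewrite /PrCRE.
set Z := [set z in CRE n n1 | _].
have [/eqP Z0|/set0Pn[z0 z0Z]] := boolP (Z == set0).
  by rewrite Z0 cards0 mul0r.
case: (arg_minP T z0Z) => zs zsZ zmin.
have h : #|Z|%:R / #|CRE n n1|%:R <= #|[set a in CRE n n1 | T zs <= T a]|%:R / #|CRE n n1|%:R :> R.
  apply: ler_wpM2r; first by rewrite invr_ge0 ler0n.
  rewrite ler_nat; apply: subset_leq_card; apply/subsetP => z zZ.
  rewrite inE (zmin z zZ) andbT; move: zZ; rewrite inE => /andP[]//.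
apply: le_trans h _.
by case/setIdP: zsZ.
Qed.


Lemma maxS_ge (R : realType) n (S : {set 'I_n}) (f : 'I_n -> R) i :
  i \in S -> f i <= maxS S f.
Proof.
move=> iS; rewrite /maxS; case: pickP => [i0 _|none]; last by move: (none i); rewrite iS.
exact: le_bigmax_cond.
Qed.

Lemma minS_le (R : realType) n (S : {set 'I_n}) (f : 'I_n -> R) i :
  i \in S -> minS S f <= f i.
Proof.
move=> iS; rewrite /minS; case: pickP => [i0 _|none]; last by move: (none i); rewrite iS.
exact: bigmin_le_cond.
Qed.

Section Main.
Variables (R : realType) (n n1 k : nat) (c kappa : R) (y1 y0 : 'I_n -> R)
  (M1 M0 : 'I_n -> bool) (m : mech).
Hypothesis hm : mech_assump m M1 M0.
Hypothesis hkappa : 0 < kappa.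

Definition yf i : \bar R :=
  if M0 i then (y0 i)%:E else
  match m with Mg => (y0 i)%:E | Mmp => +oo%E | Mmn => -oo%E end.

Variable z : assign n.

Local Notation J := (Jset M1 M0 z).
Local Notation Co := (Cobs M1 M0 z).
Local Notation Y := (Yobs y1 y0 z).
Definition Lz := minn (n1 - k) #|J|.
Local Notation JLs := (JL y1 y0 M1 M0 z Lz).
Local Notation xiz := (xi y1 y0 M1 M0 n1 k c kappa z).
Local Notation yt := (Ytilde y1 y0 M1 M0 m z xiz).

Lemma inJ i : (i \in J) = z i && M1 i.
Proof. by rewrite /Jset inE /Mobs; case: (z i). Qed.

Lemma JLsJ i : i \in JLs -> i \in J.
Proof. by rewrite /JL inE => /andP[]. Qed.

Lemma yt_J i : i \in J -> yt i = (y1 i - xiz i)%:E.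
Proof.
rewrite inJ => /andP[zi M1i].
by rewrite /Ytilde /Mobs /Yobs zi M1i.
Qed.

Lemma xi_in i : i \in JLs -> xiz i = maxS J Y - minS Co Y + kappa.
Proof. by rewrite /xi => ->. Qed.

Lemma xi_out i : i \notin JLs -> xiz i = c.
Proof. by rewrite /xi => /negbTE ->. Qed.

Lemma ctrl l : ~~ z l -> (yf l <= yt l)%E.
Proof.
move=> zl; rewrite /Ytilde /Mobs /Yobs /yf (negbTE zl).
by case: (M0 l); case: m => //=; rewrite ?leey ?leNye.
Qed.

Lemma y0_yf j : j \in J -> ((y0 j)%:E <= yf j)%E.
Proof.
rewrite inJ => /andP[_ M1j]; rewrite /yf.
case M0j: (M0 j) => //; move: hm; case: m => //= h.
  by rewrite leey.
by move: (h j); rewrite M1j M0j.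
Qed.

Lemma good i : z i -> i \notin JLs -> (i \in J -> ~~ (c < y1 i - y0 i)) ->
  (yt i <= yf i)%E.
Proof.
move=> zi iJL hB.
case M1i: (M1 i).
  have iJ : i \in J by rewrite inJ zi M1i.
  rewrite yt_J // xi_out //; apply: le_trans (y0_yf iJ).
  rewrite lee_fin; move: (hB iJ); rewrite -leNgt => h.
  by rewrite lerBlDr addrC -lerBlDr.
rewrite /Ytilde /Mobs zi M1i /yf.
move: hm; case: m => //= h.
- by rewrite ?leNye; case: (M0 i).
- by move: (h i); rewrite M1i; case: (M0 i).
- by rewrite leNye.
Qed.

Lemma JL_small j x l : j \in JLs -> x \in J -> ~~ z l ->
  le2 (yt l) l (yt j) j -> le2 (yf l) l (yf x) x.
Proof.
move=> jL xJ zl.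
have jJ := JLsJ jL.
rewrite (yt_J jJ) (xi_in jL).
have y1j : y1 j <= maxS J Y.
  have e : Y j = y1 j by rewrite {1}/Yobs; move: jJ; rewrite inJ => /andP[-> _].
  by rewrite -e; apply: maxS_ge.
case M0l: (M0 l).
  have lC : l \in Co by rewrite /Cobs inE /Mobs (negbTE zl) M0l.
  have e : Y l = y0 l by rewrite {1}/Yobs (negbTE zl).
  have h := minS_le Y lC; rewrite e in h.
  have yt_l : yt l = (y0 l)%:E by rewrite /Ytilde /Mobs /Yobs (negbTE zl) M0l.
  rewrite yt_l => hh; exfalso; move: hh; apply/negP; apply: le2_nlt.
  rewrite lte_fin.
  apply: lt_le_trans h; have hk := hkappa; move: y1j hk; set A := maxS _ _; set B := minS _ _; move=> y1j hk; lra.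
rewrite /Ytilde /Mobs /Yobs (negbTE zl) M0l /yf.
move: hm; case: m => h /=.
- by move=> hh; exfalso; move: hh; apply/negP; apply: le2_nlt; rewrite ltry.
- by move=> hh; exfalso; move: hh; apply/negP; apply: le2_nlt; rewrite ltry.
move=> _; move: xJ; rewrite inJ => /andP[_ M1x].
have -> : M0 x by move: (h x); rewrite M1x; case: (M0 x).
by apply: le2_lt; rewrite M0l ltNyr.
Qed.

Local Notation yY := (fun k => (Y k)%:E).

Lemma posJ_cnt i : posJ y1 y0 M1 M0 z i = cnt yY (fun j => j \in J) i.
Proof. exact: (sum_psi yY (fun j => j \in J) i). Qed.

Lemma inJL i : (i \in JLs) = (i \in J) && (#|J| - Lz < cnt yY (fun j => j \in J) i)%N.
Proof. by rewrite /JL inE posJ_cnt. Qed.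

Lemma Y_J i : i \in J -> Y i = y1 i.
Proof. by rewrite inJ => /andP[zi _]; rewrite /Yobs zi. Qed.

Lemma X_small i j l : i \in J -> i \notin JLs -> j \in JLs ->
  ~~ (c < y1 j - y0 j) -> ~~ z l ->
  le2 (yt l) l (yt i) i -> le2 (yf l) l (yf j) j.
Proof.
move=> iJ iJL jL jB zl h.
have jJ := JLsJ jL.
have pij : (cnt yY (fun j => j \in J) i <= cnt yY (fun j => j \in J) j)%N.
  move: iJL jL; rewrite !inJL iJ jJ /= -leqNgt; lia.
have lij := cnt_le_lx (y := yY) (P := fun j => j \in J) iJ pij.
rewrite /lx /= (Y_J iJ) (Y_J jJ) in lij.
have s := le2_shift c lij.
rewrite (yt_J iJ) (xi_out iJL) in h.
apply: le2_trans (le2_val _ (ctrl zl)) _.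
apply: le2_trans h _.
apply: le2_trans s _.
apply: le2_val; apply: le_trans (y0_yf jJ).
rewrite lee_fin; move: jB; rewrite -leNgt => hh.
by rewrite lerBlDr addrC -lerBlDr.
Qed.

Lemma card_JLs : (Lz <= #|JLs|)%N.
Proof.
have sub : JLs \subset J by apply/subsetP => i; apply: JLsJ.
have : (#|J :\: JLs| <= (#|J| - Lz).+1 - 1)%N.
  apply: (@card_inj_range _ _ (cnt yY (fun j => j \in J))).
    by apply: cnt_set_inj => i; rewrite inE => /andP[].
  move=> i; rewrite inE => /andP[iJL iJ]; rewrite cnt_pos //= ltnS.
  by move: iJL; rewrite inJL iJ /= -leqNgt.
rewrite cardsDS // subn1 /=.
have : (Lz <= #|J|)%N by rewrite /Lz geq_minr.
move: Lz #|JLs| => a b; move: #|J| => d; lia.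
Qed.

Lemma X_Lz x : x \in J -> x \notin JLs -> Lz = (n1 - k)%N.
Proof.
move=> xJ xJL.
have h1 := cnt_pos yY (P := fun j => j \in J) xJ.
move: xJL; rewrite inJL xJ /= -leqNgt => h2.
move: h1 h2; rewrite /Lz; move: (cnt yY _ x) => p; move: #|J| => d; lia.
Qed.

Local Notation ct i := (cnt yt (fun j => ~~ z j) i).
Local Notation cf i := (cnt yf (fun j => ~~ z j) i).

Lemma cmp i x : (forall l, ~~ z l -> le2 (yt l) l (yt i) i -> le2 (yf l) l (yf x) x) ->
  (ct i <= cf x)%N.
Proof.
move=> H; rewrite /cnt; apply: subset_leq_card; apply/subsetP => l.
rewrite !inE /lx => /andP[zl h]; rewrite zl /=; exact: H l zl h.
Qed.

Lemma good_ct i : z i -> (i \in J -> i \notin JLs -> ~~ (c < y1 i - y0 i)) ->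
  (ct i <= cf i)%N.
Proof.
move=> zi hB; case iJL: (i \in JLs).
  by apply: cmp => l zl; apply: JL_small => //; apply: JLsJ.
apply: cmp => l zl h.
apply: le2_trans (le2_val _ (ctrl zl)) _.
apply: le2_trans h _.
apply: le2_val; apply: good => //; first by rewrite iJL.
by move=> iJ; apply: hB => //; rewrite iJL.
Qed.

Lemma Dlemma : (#|[set i | z i && (c < y1 i - y0 i)%R]| <= n1 - k)%N ->
  forall v, (#|[set i | z i && (cf i < v)%N]| <= #|[set i | z i && (ct i < v)%N]|)%N.
Proof.
move=> HB v.
set F := [set i | z i && (cf i < v)%N].
set S := [set i | z i && (ct i < v)%N].
set B := [set i | z i && (c < y1 i - y0 i)%R].
set X := [set i | [&& i \in J, i \notin JLs & (c < y1 i - y0 i)%R]].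
have JLz : forall j, j \in JLs -> z j by move=> j /JLsJ; rewrite inJ => /andP[].
have goodF : forall i, i \in F -> i \notin X -> i \in S.
  move=> i iF nX; move: iF; rewrite inE => /andP[zi hi]; rewrite inE zi /=.
  apply: leq_ltn_trans hi; apply: good_ct => // iJ iJL.
  by apply/negP => hc; move: nX; rewrite inE iJ iJL hc.
have [/eqP FX0|/set0Pn[x0 x0FX]] := boolP (F :&: X == set0).
  apply: subset_leq_card; apply/subsetP => i iF; apply: goodF => //.
  by apply/negP => iX; move: FX0 => /setP /(_ i); rewrite inE iF iX inE.
move: x0FX; rewrite inE => /andP[x0F x0X].
have x0J : x0 \in J by move: x0X; rewrite inE => /and3P[].
have x0JL : x0 \notin JLs by move: x0X; rewrite inE => /and3P[].
have JLS : JLs \subset S.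
  apply/subsetP => j jL; rewrite inE JLz //=.
  move: x0F; rewrite inE => /andP[_ hx]; apply: leq_ltn_trans hx.
  by apply: cmp => l zl; apply: JL_small.
case: (boolP [exists j, [&& j \in JLs, j \in F & ~~ (c < y1 j - y0 j)%R]]).
  move=> /existsP[j /and3P[jL jF jB]].
  apply: subset_leq_card; apply/subsetP => i iF.
  case iX: (i \in X); last by apply: goodF => //; rewrite iX.
  move: iX; rewrite inE => /and3P[iJ iJL _].
  move: iF; rewrite !inE => /andP[zi _]; rewrite zi /=.
  move: jF; rewrite inE => /andP[_ hj]; apply: leq_ltn_trans hj.
  by apply: cmp => l zl; apply: X_small.
move=> /existsPn nj.
set A := F :\: X :\: JLs.
have FAB : F \subset A :|: B.
  apply/subsetP => i iF; rewrite inE.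
  case iX: (i \in X).
    move: iX; rewrite inE => /and3P[iJ _ hc].
    have zi : z i by move: iJ; rewrite inJ => /andP[].
    by rewrite [i \in B]inE zi hc orbT.
  case iL: (i \in JLs).
    move: (nj i); rewrite iL iF /= negbK => hc.
    by rewrite [i \in B]inE JLz // hc orbT.
  by rewrite [i \in A]inE [i \in F :\: X]inE iL iX iF.
have h1 : (#|F| <= #|A| + #|B|)%N.
  apply: leq_trans (subset_leq_card FAB) _.
  by rewrite cardsU leq_subr.
have AJL : A :|: JLs \subset S.
  apply/subsetP => i; rewrite inE => /orP[iA|iL]; last exact: (subsetP JLS).
  by move: iA; rewrite [i \in A]inE [i \in F :\: X]inE => /andP[_ /andP[iX iF]]; apply: goodF.
have h2 : (#|A| + #|JLs| <= #|S|)%N.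
  apply: leq_trans (subset_leq_card AJL).
  rewrite -cardsUI.
  have -> : A :&: JLs = set0.
    by apply/setP => i; rewrite in_set0 inE [i \in A]inE; case: (i \in JLs); rewrite ?andbF.
  by rewrite cards0 addn0.
have h3 := card_JLs.
have h4 := X_Lz x0J x0JL.
move: h1 h2 h3 h4 HB; move: #|F| #|S| #|A| #|B| #|JLs| Lz => a b d e f g; lia.
Qed.

End Main.


Lemma PrCRE_mono (R : realType) n n1 (E1 E2 : pred (assign n)) :
  (forall z, z \in CRE n n1 -> E1 z -> E2 z) -> PrCRE R n1 E1 <= PrCRE R n1 E2.
Proof.
move=> h; rewrite /PrCRE; apply: ler_wpM2r; first by rewrite invr_ge0 ler0n.
rewrite ler_nat; apply: subset_leq_card; apply/subsetP => z /setIdP[zC e1].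
by apply/setIdP; split=> //; exact: h.
Qed.

Lemma GR_anti (R : realType) n n1 s phi (yref : 'I_n -> R) (c1 c2 : R) :
  c1 <= c2 -> GR n1 s phi yref c2 <= GR n1 s phi yref c1.
Proof.
move=> h; rewrite /GR; apply: PrCRE_mono => z _ h2; exact: le_trans h h2.
Qed.

Theorem theorem6 (R : realType) (n1 n0 n : nat)
  (hn1 : (0 < n1)%N) (hn0 : (0 < n0)%N) (hn : (n1 + n0)%N = n)
  (y1 y0 : 'I_n -> R) (M1 M0 : 'I_n -> bool)
  (m : mech) (hm : mech_assump m M1 M0)
  (s : stat_kind) (phi : nat -> R) (hphi : {homo phi : a b / (a <= b)%N >-> a <= b})
  (yref : 'I_n -> R)
  (kappa : R) (hkappa : 0 < kappa)
  (k : nat) (hk1 : (1 <= k)%N) (hk2 : (k <= n1)%N) (c : R)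
  (alpha : R) (halpha0 : 0 < alpha) (halpha1 : alpha < 1) :
  PrCRE R n1 (fun z =>
    (GR n1 s phi yref
       (tR s phi z (Ytilde y1 y0 M1 M0 m z (xi y1 y0 M1 M0 n1 k c kappa z))) <= alpha)
    && Hnull y1 y0 n1 k c z) <= alpha.
Proof.
set yF := yf y0 M0 m.
apply: le_trans (validity n1 (fun a => tR s phi a yF) (ltW halpha0)).
apply: PrCRE_mono => z _ /andP[hG hH].
rewrite -(GR_any n1 s phi yref yF).
apply: le_trans hG; apply: GR_anti.
apply: (tR_le hphi).
exact: (Dlemma hm hkappa hH).
Qed.
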